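(* Let $k$ be an infinite field, $D$ a division algebra with $k$ contained in its centre, $n\ge 1$, $A=M_n(D)$, and let $B\subseteq A$ be a dense subalgebra containing $k$. Let $m\ge 1$, let $W=M_{n\times m}(D)$, regarded as a left $A$-module via matrix multiplication, and let $V\subseteq W$ be a $B$-submodule with $AV=W$. Write $m=nq+r$ with $0\le r<n$. Then there is an $A$-module automorphism $\sigma$ of $W$ such that $\sigma(V)$ contains the $q$ matrices $$E_1=(I\;0\;\cdots\;0\;0'),\quad E_2=(0\;I\;\cdots\;0\;0'),\ \dots,\ E_q=(0\;0\;\cdots\;I\;0')$$ and a matrix of the form $(Y_1\;Y_2\;\cdots\;Y_q\;Y')$, where $I$ is the $n\times n$ identity matrix, $0$ the $n\times n$ zero matrix, $0'$ the $n\times r$ zero matrix, $Y_1,\dots,Y_q$ are $n\times n$ matrices over $D$, and $Y'$ is an $n\times r$ matrix over $D$ of rank $r$. (If $r=0$ the blocks $0'$, $Y'$ are empty, and then $\sigma(V)$ contains an $A$-basis of $W\cong A^q$.)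
   Context: A subring $B$ of a ring $A$ is called dense in $A$ if every simple left $A$-module $U$ is also simple as a $B$-$\mathrm{End}_A(U)$-bimodule. The $A$-module automorphisms of $W=M_{n\times m}(D)$ are the maps $X\mapsto XT$ with $T\in GL_m(D)$. *)

(* Defs.v *)
From HB Require Import structures.
From mathcomp Require Import all_boot all_order all_algebra.
Set Implicit Arguments. Unset Strict Implicit. Unset Printing Implicit Defensive.
Import Order.TTheory GRing.Theory.
Local Open Scope ring_scope.

Definition infinite_field (F : fieldType) : Prop :=
  forall s : seq F, exists x : F, x \notin s.

Definition division_ring (D : unitRingType) : Prop :=
  forall x : D, x != 0 -> x \is a GRing.unit.

Definition is_submod (R : pzRingType) (U : lmodType R) (S : U -> Prop) : Prop :=
  S 0 /\ (forall x y, S x -> S y -> S (x + y)) /\ (forall (a : R) x, S x -> S (a *: x)).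

Definition simple_module (R : pzRingType) (U : lmodType R) : Prop :=
  (exists x : U, x != 0) /\
  forall S : U -> Prop, is_submod S -> (forall x, S x -> x = 0) \/ (forall x, S x).

Definition is_endo (R : pzRingType) (U : lmodType R) (f : U -> U) : Prop :=
  (forall x y, f (x + y) = f x + f y) /\ (forall (a : R) x, f (a *: x) = a *: f x).

(* U is simple as a B-End_R(U)-bimodule *)
Definition simple_bimodule (R : pzRingType) (B : R -> Prop) (U : lmodType R) : Prop :=
  (exists x : U, x != 0) /\
  forall S : U -> Prop,
    S 0 -> (forall x y, S x -> S y -> S (x + y)) ->
    (forall b x, B b -> S x -> S (b *: x)) ->
    (forall f, is_endo f -> forall x, S x -> S (f x)) ->
    (forall x, S x -> x = 0) \/ (forall x, S x).

Definition dense (R : pzRingType) (B : R -> Prop) : Prop :=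
  forall U : lmodType R, simple_module U -> simple_bimodule B U.

Definition subalg_containing_k (F : fieldType) (D : unitAlgType F) (N : nat)
  (B : 'M[D]_N.+1 -> Prop) : Prop :=
  (forall c : F, B ((c%:A : D)%:M)) /\
  (forall x y, B x -> B y -> B (x + y)) /\
  (forall x y, B x -> B y -> B (x * y)).

Definition B_submodule (D : nzRingType) (N m : nat) (B : 'M[D]_N.+1 -> Prop)
  (V : 'M[D]_(N.+1, m) -> Prop) : Prop :=
  V 0 /\ (forall x y, V x -> V y -> V (x + y)) /\
  (forall b x, B b -> V x -> V (b *m x)).

Definition A_generates (D : nzRingType) (N m : nat) (V : 'M[D]_(N.+1, m) -> Prop) : Prop :=
  forall w : 'M[D]_(N.+1, m), exists s : seq ('M[D]_N.+1 * 'M[D]_(N.+1, m)),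
    (forall p, p \in s -> V p.2) /\ w = \sum_(p <- s) p.1 *m p.2.

Definition A_automorphism (D : nzRingType) (N m : nat)
  (sigma : 'M[D]_(N.+1, m) -> 'M[D]_(N.+1, m)) : Prop :=
  (forall x y, sigma (x + y) = sigma x + sigma y) /\
  (forall (a : 'M[D]_N.+1) x, sigma (a *m x) = a *m sigma x) /\
  bijective sigma.

(* E_j = (0 ... I ... 0 0') with I in the j-th n x n block (j < q = m %/ N) *)
Definition Eblk (D : nzRingType) (N m : nat) (j : 'I_(m %/ N.+1)) : 'M[D]_(N.+1, m) :=
  \matrix_(i < N.+1, c < m) (if (c : nat) == (j * N.+1 + i)%N then 1 else 0).

Lemma last_col_lt (N m : nat) (c : 'I_(m %% N.+1)) : (m %/ N.+1 * N.+1 + c < m)%N.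
Proof. have h := ltn_ord c; rewrite [X in (_ < X)%N](divn_eq m N.+1) ltn_add2l; exact h. Qed.

Definition last_cols (D : nzRingType) (N m : nat) (Y : 'M[D]_(N.+1, m))
  : 'M[D]_(N.+1, m %% N.+1) :=
  \matrix_(i < N.+1, c < m %% N.+1) Y i (Ordinal (last_col_lt c)).

(* rank of an N x r matrix over a division ring equals r, i.e. its columns are
   (right) linearly independent over D *)
Definition full_col_rank (D : nzRingType) (N r : nat) (Y : 'M[D]_(N, r)) : Prop :=
  forall x : 'cV[D]_r, Y *m x = 0 -> x = 0.

(* Main.v *)
Require Import Defs.
From HB Require Import structures.
From mathcomp Require Import all_boot all_order all_algebra.
From Stdlib Require Import Classical.
Set Implicit Arguments. Unset Strict Implicit. Unset Printing Implicit Defensive.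
Import GRing.Theory.
Local Open Scope ring_scope.


Lemma row0_col' (R : nzRingType) b (v : 'rV[R]_b.+1) :
  v 0 0 = 0 -> col' 0 v = 0 -> v = 0.
Proof.
move=> h0 h1; apply/rowP => j.
rewrite [RHS]mxE.
case: (unliftP 0 j) => [j'|] ->; last by rewrite h0.
by have := congr1 (fun M : 'rV_b => M 0 j') h1; rewrite !mxE.
Qed.

Lemma sum_bump (V : zmodType) P (i0 : nat) (H : nat -> V) : (i0 < P.+1)%N ->
  \sum_(i < P.+1) H i = H i0 + \sum_(i < P) H (bump i0 i).
Proof.
move=> hi; by rewrite (bigD1_ord (Ordinal hi)) //=.
Qed.

Lemma steinitz (R : nzRingType) (hinv : forall x : R, x != 0 -> exists y, y * x = 1) b :
  forall P (F : nat -> 'rV[R]_b), (b < P)%N ->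
  exists a : nat -> R, \sum_(i < P) a i *: F i = 0 /\ exists2 i, (i < P)%N & a i != 0.
Proof.
elim: b => [|b IH] P F hP.
  exists (fun _ => 1); split; first by apply/rowP => [[]].
  by exists 0%N => //; rewrite oner_eq0.
case: (boolP [forall i : 'I_P, F i 0 0 == 0]) => [/forallP hall | /forallPn [i0 hi0]].
  have [a [ha [i hi hai]]] := IH P (fun i => col' 0 (F i)) (ltnW hP).
  exists a; split; last by exists i.
  apply: row0_col'.
    rewrite summxE; apply: big1 => k _; rewrite mxE.
    by move/eqP: (hall k) => ->; rewrite mulr0.
  rewrite -ha; apply/rowP => j; rewrite !mxE !summxE; apply: eq_bigr => k _.
  by rewrite !mxE.
move: hi0; move: i0; move: hP; move: F; case: P => [|P] F hP i0 hi0; first by move: hi0; case: i0.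
have [pi hpi] := hinv _ hi0.
pose c i := F (bump i0 i) 0 0 * pi.
pose G i := col' 0 (F (bump i0 i) - c i *: F i0).
have [a [ha [i1 hi1 hai]]] := IH P G hP.
exists (fun k : nat => if k == i0 :> nat then - \sum_(i < P) a i * c i else a (unbump i0 k)).
split; last first.
  exists (bump i0 i1); first by rewrite /bump; case: (i0 <= i1)%N; rewrite ?add1n ?add0n ltnS // ltnW.
  have hb : (bump i0 i1 == i0) = false by rewrite eq_sym; apply/negbTE/neq_bump.
  by rewrite hb bumpK.
rewrite (sum_bump (fun k : nat => (if k == i0 :> nat then - \sum_(i < P) a i * c i else a (unbump i0 k)) *: F k) (ltn_ord i0)) /= eqxx.
have -> : \sum_(i < P) (if bump i0 i == i0 then - \sum_(i0 < P) a i0 * c i0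
      else a (unbump i0 (bump i0 i))) *: F (bump i0 i) = \sum_(i<P) a i *: F (bump i0 i).
  apply: eq_bigr => i _.
  have hb : (bump i0 i == i0) = false by rewrite eq_sym; apply/negbTE/neq_bump.
  by rewrite hb bumpK.
have -> : (- \sum_(i < P) a i * c i) *: F i0 + \sum_(i < P) a i *: F (bump i0 i)
   = \sum_(i < P) a i *: (F (bump i0 i) - c i *: F i0).
  rewrite scaleNr scaler_suml addrC.
  rewrite -sumrB; apply: eq_bigr => i _; by rewrite scalerBr scalerA.
apply: row0_col'.
  rewrite summxE; apply: big1 => i _; rewrite !mxE.
  by rewrite /c -mulrA hpi mulr1 subrr mulr0.
rewrite -ha; apply/rowP => j; rewrite !mxE !summxE; apply: eq_bigr => k _.
by rewrite !mxE.
Qed.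


Definition indep (R : nzRingType) m P (G : nat -> 'rV[R]_m) :=
  forall a : nat -> R, \sum_(i < P) a i *: G i = 0 -> forall i, (i < P)%N -> a i = 0.

Section Div.
Variable (D : unitRingType).
Hypothesis hD : division_ring D.

Lemma not_indep_big b P (G : nat -> 'rV[D]_b) : (b < P)%N -> ~ indep P G.
Proof.
move=> hP hind.
have hinv : forall x : D, x != 0 -> exists y, y * x = 1.
  by move=> x /hD hx; exists x^-1; rewrite mulVr.
have [a [ha [i hi hai]]] := @steinitz D hinv b P G hP.
by move: hai; rewrite (hind a ha i hi) eqxx.
Qed.

Lemma col_kernel m P (G : nat -> 'rV[D]_m.+1) : (P < m.+1)%N ->
  exists2 z : 'cV[D]_m.+1, z != 0 & forall i, (i < P)%N -> G i *m z = 0.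
Proof.
move=> hP.
pose Gc (j : nat) : 'rV[D^c]_P := \row_(i < P) (G i 0 (inord j) : D^c).
have hinv : forall x : D^c, x != 0 -> exists y : D^c, y * x = 1.
  move=> x /hD hx; exists (x : D)^-1.
exact: (@mulrV D x hx).
have [a [ha [j hj haj]]] := @steinitz (D^c) hinv P m.+1 Gc hP.
exists (\col_(j < m.+1) (a j : D)).
  apply/negP => /eqP/matrixP /(_ (inord j) 0); rewrite !mxE inordK //.
  by move/eqP; rewrite (negPf haj).
move=> i hi; apply/rowP => k; rewrite ord1 !mxE.
have := congr1 (fun M : 'rV[D^c]_P => M 0 (Ordinal hi)) ha.
rewrite !mxE summxE /= => h; apply: etrans h.
by apply: eq_bigr => l _; rewrite !mxE inord_val.
Qed.
End Div.


Section Div2.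
Variable (D : unitRingType).
Hypothesis hD : division_ring D.

Lemma unit_cancel (x y : D) : x * y = 0 -> y != 0 -> x = 0.
Proof. by move=> h /hD hy; rewrite -(mulrK hy x) h mul0r. Qed.

Lemma indep_ext_span m P (G : nat -> 'rV[D]_m) : indep P G ->
  ~ (exists a : nat -> D, G P = \sum_(i < P) a i *: G i) -> indep P.+1 G.
Proof.
move=> hi hn a; rewrite big_ord_recr /= => h.
have haP : a P = 0.
  apply/eqP; apply/negPn/negP => /hD hu; apply: hn.
  exists (fun i => - ((a P)^-1 * a i)).
  have h2 : a P *: G P = - \sum_(i < P) a i *: G i by apply/eqP; rewrite -addr_eq0 addrC h.
  have -> : G P = (a P)^-1 *: (a P *: G P) by rewrite scalerA mulVr // scale1r.
  rewrite h2 scalerN scaler_sumr -sumrN; apply: eq_bigr => i _.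
  by rewrite scalerA scaleNr.
move: h; rewrite haP scale0r addr0 => h i; rewrite ltnS leq_eqVlt => /orP [/eqP -> //| hiP].
exact: hi h i hiP.
Qed.

Lemma indep_ext_z m P (G : nat -> 'rV[D]_m) (z : 'cV_m) : indep P G ->
  (forall i, (i < P)%N -> G i *m z = 0) -> G P *m z != 0 -> indep P.+1 G.
Proof.
move=> hi hz hP a; rewrite big_ord_recr /= => h.
have haP : a P = 0.
  have := congr1 (fun M => M *m z) h; rewrite mul0mx mulmxDl mulmx_suml big1; last first.
    by move=> i _; rewrite -scalemxAl hz // scaler0.
  rewrite add0r -scalemxAl => h2.
  have [k hk] : exists k, (G P *m z) 0 k != 0.
    by apply/existsP; apply: contraR hP; rewrite negb_exists => /forallP hk; apply/eqP/rowP => k; rewrite [RHS]mxE; apply/eqP; exact: (negPn (hk k)).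
  apply: unit_cancel hk.
  by have := congr1 (fun M : 'M[D]_1 => M 0 k) h2; rewrite [X in X = _]mxE [X in _ = X]mxE.
move: h; rewrite haP scale0r addr0 => h i; rewrite ltnS leq_eqVlt => /orP [/eqP -> //| hiP].
exact: hi h i hiP.
Qed.
End Div2.


Section Div3.
Variable (D : unitRingType).
Hypothesis hD : division_ring D.

Lemma nz_row m (v : 'rV[D]_m) : v != 0 -> exists k, v 0 k != 0.
Proof.
move=> hv; apply/existsP; apply: contraR hv; rewrite negb_exists => /forallP hk.
by apply/eqP/rowP => k; rewrite [RHS]mxE; apply/eqP; exact: (negPn (hk k)).
Qed.

Lemma scale_row_eq0 m (c : D) (v : 'rV[D]_m) : c *: v = 0 -> v != 0 -> c = 0.
Proof.
move=> h /nz_row [k hk]; apply: (unit_cancel hD) hk.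
by have := congr1 (fun M : 'rV[D]_m => M 0 k) h; rewrite !mxE.
Qed.

Lemma indep_transform m P (G H : nat -> 'rV[D]_m) (e kappa : nat -> D) :
  indep P.+1 G -> (forall i, (i < P)%N -> H i = e i *: G i) ->
  (forall i, (i < P)%N -> e i != 0) ->
  H P = G P + \sum_(i < P) kappa i *: H i -> indep P.+1 H.
Proof.
move=> hG hH he hP a; rewrite big_ord_recr /= hP => h.
pose b i := if (i < P)%N then (a i + a P * kappa i) * e i else a P.
have e1 : \sum_(i < P) b i *: G i = \sum_(i < P) a i *: H i + a P *: \sum_(i < P) kappa i *: H i.
  rewrite scaler_sumr -big_split /=; apply: eq_bigr => i _.
  by rewrite /b ltn_ord hH // scalerA !scalerA mulrDl -scalerDl mulrA.
have hb : \sum_(i < P.+1) b i *: G i = 0.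
  rewrite big_ord_recr /= e1 /b ltnn; apply: etrans h; rewrite scalerDr.
  by rewrite [a P *: G P + _]addrC addrA.
have haP : a P = 0 by have := hG b hb P (ltnSn _); rewrite /b ltnn.
move=> i; rewrite ltnS leq_eqVlt => /orP [/eqP -> //| hiP].
have := hG b hb i (ltnW hiP); rewrite /b hiP haP mul0r addr0 => h2.
exact: (unit_cancel hD) h2 (he i hiP).
Qed.

Lemma eig_indep Q m (M0 M1 : 'M[D]_(Q, m)) (t : nat -> D) (y : nat -> 'rV[D]_Q) L :
  (forall x : 'rV_Q, x *m M0 = 0 -> x = 0) ->
  (forall j x, t j * x = x * t j) ->
  (forall j j', (j < L)%N -> (j' < L)%N -> j != j' -> t j - t j' != 0) ->
  (forall j, (j < L)%N -> t j *: (y j *m M0) + y j *m M1 = 0) ->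
  (forall j, (j < L)%N -> y j != 0) -> indep L y.
Proof.
move=> hM0 ht; elim: L => [|L IH] hd hr hy a h; first by [].
have E0 : \sum_(j < L.+1) a j *: (y j *m M0) = 0.
  by have := congr1 (fun M => M *m M0) h; rewrite mulmx_suml mul0mx => h0; apply: etrans h0; apply: eq_bigr => j _; rewrite scalemxAl.
have E1 : \sum_(j < L.+1) (a j * t j) *: (y j *m M0) = 0.
  have := congr1 (fun M => M *m M1) h; rewrite mulmx_suml mul0mx => h1.
  apply/eqP; rewrite -oppr_eq0 -sumrN; apply/eqP; apply: etrans h1; apply: eq_bigr => j _.
  rewrite -scalemxAl -scalerA -scalerN; congr (_ *: _).
  by apply/eqP; rewrite eqr_oppLR -addr_eq0; apply/eqP; exact: hr (ltn_ord j).
have E2 : \sum_(j < L.+1) (a j * (t L - t j)) *: y j = 0.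
  apply: hM0; rewrite mulmx_suml.
  have -> : \sum_(j < L.+1) ((a j * (t L - t j)) *: y j) *m M0 =
     t L *: \sum_(j < L.+1) a j *: (y j *m M0) - \sum_(j < L.+1) (a j * t j) *: (y j *m M0).
    rewrite scaler_sumr -sumrB; apply: eq_bigr => j _.
    by rewrite -scalemxAl mulrBr scalerBl scalerA ht.
  by rewrite E0 E1 scaler0 subrr.
move: E2; rewrite big_ord_recr /= subrr mulr0 scale0r addr0 => E2.
have hlt : forall j, (j < L)%N -> a j = 0.
  move=> j hj; have := IH (fun j j' h1 h2 => hd j j' (ltnW h1) (ltnW h2))
     (fun j h1 => hr j (ltnW h1)) (fun j h1 => hy j (ltnW h1)) (fun i => a i * (t L - t i)) E2 j hj.
  move=> h2; apply: (unit_cancel hD h2); apply: hd => //; first exact: ltnW.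
  by rewrite neq_ltn hj orbT.
move=> j; rewrite ltnS leq_eqVlt => /orP [/eqP -> | hj]; last exact: hlt.
move: h; rewrite big_ord_recr /= big1 ?add0r; last by move=> i _; rewrite hlt // scale0r.
by move/scale_row_eq0; apply; apply: hy.
Qed.

End Div3.


Lemma fin_choice (T : Type) (t0 : T) L (P : nat -> T -> Prop) :
  (forall j, (j < L)%N -> exists y, P j y) -> exists f : nat -> T, forall j, (j < L)%N -> P j (f j).
Proof.
elim: L => [|L IH] h; first by exists (fun _ => t0).
have [f hf] := IH (fun j hj => h j (ltnW hj)).
have [y hy] := h L (ltnSn _).
exists (fun j => if j == L then y else f j) => j; rewrite ltnS leq_eqVlt => /orP [/eqP -> | hj].
  by rewrite eqxx.
by rewrite (ltn_eqF hj); apply: hf.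
Qed.

Lemma fresh_list (F : fieldType) : infinite_field F -> forall L,
  exists ts : seq F, [/\ uniq ts, size ts = L & 0 \notin ts].
Proof.
move=> hF; elim => [|L [ts [hu hs h0]]]; first by exists [::].
have [x hx] := hF (0 :: ts).
move: hx; rewrite in_cons negb_or => /andP [hx0 hxt].
by exists (x :: ts); rewrite /= hxt hu hs in_cons negb_or eq_sym hx0 h0.
Qed.

Lemma indep_ext (R : nzRingType) m P (G H : nat -> 'rV[R]_m) :
  (forall i, (i < P)%N -> G i = H i) -> indep P G -> indep P H.
Proof.
move=> e hG a ha; apply: hG; apply: etrans ha; apply: eq_bigr => i _; by rewrite e.
Qed.

Lemma not_indepP (R : nzRingType) m P (G : nat -> 'rV[R]_m) : ~ indep P G ->
  exists a : nat -> R, \sum_(i < P) a i *: G i = 0 /\ exists2 i, (i < P)%N & a i != 0.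
Proof.
move=> h; apply: NNPP => hn; apply: h => a ha i hi; apply/eqP/negPn/negP => hai.
by apply: hn; exists a; split => //; exists i.
Qed.

Lemma indep_rfree (R : nzRingType) m P (G : nat -> 'rV[R]_m) : indep P G ->
  forall x : 'rV_P, x *m (\matrix_(i < P) G i) = 0 -> x = 0.
Proof.
move=> hG x hx; apply/rowP => i; rewrite mxE.
have := hG (fun k => x 0 (insubd i k)) _ i (ltn_ord i); rewrite valKd; apply.
apply: etrans hx; rewrite mulmx_sum_row.
by apply: eq_bigr => k _; rewrite rowK valKd.
Qed.

Section Alg.
Variables (F : fieldType) (D : unitAlgType F).
Hypothesis hD : division_ring D.

Lemma alg_eq0 (c : F) : ((c%:A : D) == 0) = (c == 0).
Proof. by rewrite scaler_eq0 oner_eq0 orbF. Qed.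

Lemma bad_bound Q m (M0 M1 : nat -> 'rV[D]_m) (ts : seq F) :
  indep Q M0 -> uniq ts -> size ts = Q.+1 -> 0 \notin ts ->
  exists2 s, s \in ts & indep Q (fun i => M0 i + (s%:A : D) *: M1 i).
Proof.
move=> hM0 hu hs h0; apply: NNPP => hn.
have hj : forall j, (j < Q.+1)%N -> exists y : 'rV[D]_Q, y != 0 /\
    \sum_(i < Q) y 0 i *: (M0 i + ((nth 0 ts j)%:A : D) *: M1 i) = 0.
  move=> j hjQ.
  have [a [ha [i hi hai]]] : exists a : nat -> D, \sum_(i < Q) a i *: (M0 i + ((nth 0 ts j)%:A : D) *: M1 i) = 0 /\ exists2 i, (i < Q)%N & a i != 0.
    apply: (@not_indepP _ m Q (fun i => M0 i + ((nth 0 ts j)%:A : D) *: M1 i)) => hind; apply: hn; exists (nth 0 ts j) => //.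
    by apply: mem_nth; rewrite hs.
  exists (\row_(k < Q) a k); split.
    by apply/negP => /eqP/rowP /(_ (Ordinal hi)); rewrite !mxE; apply/eqP.
  by apply: etrans ha; apply: eq_bigr => k _; rewrite mxE.
have [y hy] := fin_choice 0 hj.
pose M0m := \matrix_(i < Q) M0 i.
pose M1m := \matrix_(i < Q) M1 i.
pose t j := (((nth 0 ts j)^-1)%:A : D).
have hnz : forall j, (j < Q.+1)%N -> nth 0 ts j != 0.
  by move=> j hjQ; apply: contraNneq h0 => <-; apply: mem_nth; rewrite hs.
have hind : indep Q.+1 y.
  apply: (eig_indep hD (M0 := M0m) (M1 := M1m) (t := t)).
  - exact: indep_rfree.
  - by move=> j x; rewrite /t mulr_algl mulr_algr.
  - move=> j j' hj1 hj2 hjj; rewrite /t -scalerBl alg_eq0 subr_eq0.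
    apply: contra hjj => /eqP /invr_inj /eqP; rewrite nth_uniq // hs //.
  - move=> j hjQ; have [_ hyj] := hy j hjQ.
    have e : y j *m M0m + ((nth 0 ts j)%:A : D) *: (y j *m M1m) = 0.
      apply: etrans hyj; rewrite !mulmx_sum_row scaler_sumr -big_split /=; apply: eq_bigr => i _.
      rewrite !rowK scalerDr !scalerA mulr_algl mulr_algr; done.
    have := congr1 (fun M => t j *: M) e; rewrite scaler0 scalerDr scalerA /t.
    by rewrite mulr_algl scalerA mulVf ?hnz // !scale1r.
  - by move=> j hjQ; have [] := hy j hjQ.
exact: (not_indep_big hD (ltnSn Q) hind).
Qed.
End Alg.


Section Sq.
Variable (D : unitRingType).
Hypothesis hD : division_ring D.

Lemma span_full m (G : nat -> 'rV[D]_m) (v : 'rV[D]_m) : indep m G ->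
  exists a : nat -> D, v = \sum_(i < m) a i *: G i.
Proof.
move=> hG; apply: NNPP => hn.
pose G' i := if i == m then v else G i.
have hG' : indep m G' by apply: indep_ext hG => i hi; rewrite /G' (ltn_eqF hi).
apply: (not_indep_big hD (ltnSn m) (G := G')).
apply: (indep_ext_span hD hG') => -[a ha]; apply: hn; exists a.
rewrite /G' eqxx in ha; rewrite ha; apply: eq_bigr => i _.
by rewrite (ltn_eqF (ltn_ord i)).
Qed.

Lemma sq_inv m (G : nat -> 'rV[D]_m) : indep m G ->
  exists T : 'M[D]_m, T *m (\matrix_(i < m) G i) = 1%:M /\ (\matrix_(i < m) G i) *m T = 1%:M.
Proof.
case: m G => [|m] G hG.
  by exists 0; split; apply/matrixP => [[]].
set S := \matrix_(i < m.+1) G i.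
have hS := indep_rfree hG.
have hrow : forall l : 'I_m.+1, exists t : 'rV[D]_m.+1, t *m S = row l 1%:M.
  move=> l; have [a ha] := span_full (row l 1%:M) hG.
  exists (\row_(i < m.+1) a i); rewrite ha mulmx_sum_row.
  by apply: eq_bigr => i _; rewrite rowK mxE.
have [T hT] : exists T : 'M[D]_m.+1, T *m S = 1%:M.
  have [f hf] := @fin_choice 'rV[D]_m.+1 0 m.+1 (fun j t => t *m S = row (inord j) 1%:M)
     (fun j hj => hrow (inord j)).
  exists (\matrix_(i < m.+1) f i); apply/row_matrixP => l.
  by rewrite row_mul rowK hf // inord_val.
exists T; split => //.
apply/eqP; rewrite -subr_eq0; apply/eqP/row_matrixP => l.
rewrite row0; apply: hS.
by rewrite -row_mul mulmxBl -mulmxA hT mulmx1 mul1mx subrr row0.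
Qed.
End Sq.


Definition colT (D : nzRingType) (N : nat) := 'cV[D]_N.
HB.instance Definition _ (D : nzRingType) N := GRing.Zmodule.on (colT D N).
Definition colT_scale (D : nzRingType) N (a : 'M[D]_N) (x : colT D N) : colT D N := a *m x.
Lemma colT_scaleA (D : nzRingType) N (a b : 'M[D]_N) (x : colT D N) :
  colT_scale a (colT_scale b x) = colT_scale (a * b) x.
Proof. exact: mulmxA. Qed.
Lemma colT_scale1 (D : nzRingType) N (x : colT D N) : colT_scale 1 x = x.
Proof. exact: mul1mx. Qed.
Lemma colT_scaleDr (D : nzRingType) N (a : 'M[D]_N) (x y : colT D N) :
  colT_scale a (x + y) = colT_scale a x + colT_scale a y.
Proof. exact: mulmxDr. Qed.
Lemma colT_scaleDl (D : nzRingType) N (x : colT D N) :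
  {morph (@colT_scale D N)^~ x : a b / a + b}.
Proof. by move=> a b; exact: mulmxDl. Qed.
HB.instance Definition _ (D : nzRingType) N :=
  GRing.Zmodule_isLmodule.Build 'M[D]_N (colT D N)
    (@colT_scaleA D N) (@colT_scale1 D N) (@colT_scaleDr D N) (@colT_scaleDl D N).

Lemma colT_scaleE (D : nzRingType) N (a : 'M[D]_N) (x : colT D N) : a *: x = a *m x.
Proof. by []. Qed.

Section Dense.
Variables (D : unitRingType) (n : nat).
Hypothesis hD : division_ring D.

Lemma colT_simple : simple_module (colT D n.+1).
Proof.
split.
  exists (delta_mx 0 0); apply/negP => /eqP /matrixP /(_ 0 0).
  by rewrite !mxE eqxx /= => /eqP; rewrite oner_eq0.
move=> S [S0 [SD SZ]].
case: (classic (forall x, S x -> x = 0)) => [h|h]; [by left | right].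
have [u [Su hu]] : exists u, S u /\ u != 0.
  apply: NNPP => hn; apply: h => x Sx; apply/eqP/negPn/negP => hx.
  by apply: hn; exists x.
have [i hi] : exists i, u i 0 != 0.
  apply/existsP; apply: contraR hu; rewrite negb_exists => /forallP hk.
  by apply/eqP/matrixP => k l; rewrite ord1 [RHS]mxE; apply/eqP; exact: (negPn (hk k)).
move=> y.
pose g : 'rV[D]_n.+1 := (u i 0)^-1 *: delta_mx 0 i.
have hg : g *m u = 1%:M.
  apply/matrixP => a b; rewrite !ord1 !mxE (bigD1 i) //= big1 ?addr0.
    by rewrite !mxE !eqxx mulr1 mulVr //; apply: hD.
  by move=> k hk; rewrite !mxE (negPf hk) mulr0 mul0r.
have -> : y = (y *m g : 'M_n.+1) *: u by rewrite colT_scaleE -mulmxA hg mulmx1.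
exact: SZ.
Qed.

Lemma endo_right (f : colT D n.+1 -> colT D n.+1) : is_endo f ->
  exists c : 'M[D]_1, forall x, f x = x *m c.
Proof.
move=> [_ hf]; exists ((delta_mx 0 0)^T *m f (delta_mx 0 0)) => x.
have e1 : (delta_mx 0 0 : 'cV[D]_n.+1)^T *m delta_mx 0 0 = 1%:M.
  rewrite trmx_delta mul_delta_mx; apply/matrixP => a b.
  by rewrite !ord1 !mxE.
have hx : x = (x *m (delta_mx 0 0)^T : 'M_n.+1) *: (delta_mx 0 0 : colT D n.+1).
  by rewrite colT_scaleE -mulmxA e1 mulmx1.
by rewrite {1}hx hf colT_scaleE mulmxA.
Qed.

Lemma dense_span (B : 'M[D]_n.+1 -> Prop) :
  (forall x y, B x -> B y -> B (x * y)) -> B 1 -> dense B ->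
  forall x : 'cV[D]_n.+1, x != 0 -> forall y : 'cV[D]_n.+1,
  exists s : seq ('M[D]_n.+1 * 'M[D]_1), (forall p, p \in s -> B p.1) /\
     y = \sum_(p <- s) p.1 *m x *m p.2.
Proof.
move=> BM B1 hB x hx.
have [_ h] := hB (colT D n.+1) colT_simple.
pose S (y : colT D n.+1) := exists s : seq ('M[D]_n.+1 * 'M[D]_1), (forall p, p \in s -> B p.1) /\
     y = \sum_(p <- s) p.1 *m x *m p.2.
have := h S.
case.
- by exists [::]; rewrite big_nil.
- move=> y1 y2 [s1 [h1 ->]] [s2 [h2 ->]]; exists (s1 ++ s2); rewrite big_cat; split => //.
  by move=> p; rewrite mem_cat => /orP [] ?; [apply: h1 | apply: h2].
- move=> b y Bb [s1 [h1 ->]]; exists [seq (b * p.1, p.2) | p <- s1]; split.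
    by move=> p /mapP [q hq ->]; apply: BM => //; apply: h1.
  rewrite colT_scaleE big_map mulmx_sumr; apply: eq_bigr => p _.
  by rewrite !mulmxA.
- move=> f hf y [s1 [h1 ->]]; have [c hc] := endo_right hf.
  exists [seq (p.1, p.2 *m c) | p <- s1]; split.
    by move=> p /mapP [q hq ->] /=; apply: h1.
  rewrite hc big_map mulmx_suml; apply: eq_bigr => p _.
  by rewrite !mulmxA.
- move=> h0; exfalso; move/negP: hx; apply; apply/eqP; apply: (h0 (x : colT D n.+1)).
  by exists [:: (1, 1%:M)]; split; [move=> p; rewrite inE => /eqP -> | rewrite big_seq1 mul1mx mulmx1].
- by [].
Qed.
End Dense.


Lemma rowD' (R : nzRingType) p q k (A B : 'M[R]_(p, q)) : row k (A + B) = row k A + row k B.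
Proof. by apply/rowP => j; rewrite !mxE. Qed.
Lemma rowZ' (R : nzRingType) p q k (a : R) (A : 'M[R]_(p, q)) : row k (a *: A) = a *: row k A.
Proof. by apply/rowP => j; rewrite !mxE. Qed.

Section Key.
Variables (F : fieldType) (D : unitAlgType F) (n m : nat).
Variables (B : 'M[D]_n.+1 -> Prop) (V : 'M[D]_(n.+1, m.+1) -> Prop).
Hypotheses (hF : infinite_field F) (hD : division_ring D) (hB : subalg_containing_k B)
  (hdense : dense B) (hV : B_submodule B V) (hgen : A_generates V).

Lemma B1 : B 1.
Proof. by case: hB => h _; have := h 1; rewrite scale1r. Qed.

Lemma Bscal (c : F) : B ((c%:A : D)%:M).
Proof. by case: hB. Qed.

Lemma V0 : V 0. Proof. by case: hV. Qed.
Lemma VD x y : V x -> V y -> V (x + y). Proof. by case: hV => _ [h _]; apply: h. Qed.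
Lemma VB b x : B b -> V x -> V (b *m x). Proof. by case: hV => _ [_ h]; apply: h. Qed.

Lemma exists_w (z : 'cV[D]_m.+1) : z != 0 -> exists2 w, V w & w *m z != 0.
Proof.
move=> hz; apply: NNPP => hn.
have hw : forall w, V w -> w *m z = 0.
  by move=> w Vw; apply/eqP/negPn/negP => hwz; apply: hn; exists w.
move/negP: hz; apply; apply/eqP/matrixP => l k; rewrite ord1 [RHS]mxE.
pose W : 'M[D]_(n.+1, m.+1) := \matrix_(i, c) (c == l)%:R.
have [s [hs eW]] := hgen W.
have : W *m z = 0.
  rewrite eW mulmx_suml big1_seq // => p hp; rewrite -mulmxA hw ?mulmx0 //.
  exact: hs.
move/matrixP/(_ 0 0); rewrite !mxE (bigD1 l) //= big1 ?addr0.
  by rewrite !mxE eqxx mul1r.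
by move=> c hc; rewrite !mxE (negPf hc) mul0r.
Qed.

Definition fam (Rf : nat -> 'rV[D]_m.+1) p (v : 'M[D]_(n.+1, m.+1)) (i : nat) : 'rV[D]_m.+1 :=
  if (i < p)%N then Rf i else row (inord (i - p)) v.


Lemma key_step p t (Rf : nat -> 'rV[D]_m.+1) v : V v ->
  indep (p + t) (fam Rf p v) -> (t < n.+1)%N -> (p + t < m.+1)%N ->
  exists2 u, V u & indep (p + t).+1 (fam Rf p u).
Proof.
move=> Vv hind htn hpm.
set P := (p + t)%N in hind hpm *.
set G := fam Rf p v in hind *.
case: (classic (exists a : nat -> D, G P = \sum_(i < P) a i *: G i)) => [[a ha]|hn]; last first.
  by exists v => //; apply: (indep_ext_span hD).
have hGP : G P = row (inord t) v by rewrite /G /fam ltnNge leq_addr /= /P addKn.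
have [z hz hGz] := @col_kernel D hD m P G hpm.
have [w Vw hwz] := exists_w hz.
pose beta : 'rV[D]_n.+1 := delta_mx 0 (inord t) - \sum_(l < t) a (p + l)%N *: delta_mx 0 (inord l).
have [b Bb hb] : exists2 b, B b & beta *m b *m (w *m z) != 0.
  have [s [hs es]] := dense_span hD (proj2 (proj2 hB)) B1 hdense hwz (delta_mx (inord t) 0).
  apply: NNPP => hn2.
  have : beta *m (delta_mx (inord t) 0 : 'cV[D]_n.+1) = 0.
    rewrite es mulmx_sumr big1_seq // => q hq; rewrite !mulmxA.
    apply/eqP/negPn/negP => hq2; apply: hn2; exists q.1; first by apply: hs; move: hq => /andP [].
    by apply: contraNneq hq2; rewrite mulmxA => ->; rewrite mul0mx.
  move/matrixP/(_ 0 0); rewrite !mxE (bigD1 (inord t)) //= big1 ?addr0.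
    rewrite !mxE !eqxx /= mulr1 summxE big1 ?subr0 ?oner_eq0; first by move/eqP; rewrite oner_eq0.
    move=> l _; rewrite !mxE eqxx /=.
    have -> : (inord t == inord l :> 'I_n.+1) = false.
      apply/negbTE; rewrite -val_eqE /= !inordK ?neq_ltn ?ltn_ord ?orbT //.
      exact: ltn_trans (ltn_ord l) htn.
    by rewrite mulr0.
  by move=> k hk; rewrite !mxE (negPf hk) mulr0.
pose g2 := b *m w.
have Vg2 : V g2 by apply: VB.
pose h := beta *m g2.
have hzh : h *m z != 0 by rewrite /h /g2 !mulmxA -(mulmxA _ w z).
pose M0 i := if (i < P)%N then G i else h.
have hM0 : indep P.+1 M0.
  apply: (indep_ext_z hD (z := z)).
  - by apply: indep_ext hind => i hi; rewrite /M0 hi.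
  - by move=> i hi; rewrite /M0 hi; apply: hGz.
  - by rewrite /M0 ltnn.
pose M1 i := if (p <= i < P)%N then row (inord (i - p)) g2 else 0.
have [ts [hu hs h0]] := fresh_list hF P.+2.
have [sc hsc hinds] := bad_bound hD M1 hM0 hu hs h0.
have sc0 : sc != 0 by apply: contraNneq h0 => <-.
pose c := sc^-1.
have ecs : (c%:A : D) * (sc%:A : D) = 1 by rewrite mulr_algl scalerA mulVf // scale1r.
have c0 : (c%:A : D) != 0 by rewrite alg_eq0 invr_eq0.
pose u := (c%:A : D)%:M *m v + g2.
have rowu : forall k, row k u = (c%:A : D) *: row k v + row k g2.
  by move=> k; rewrite /u rowD' mul_scalar_mx rowZ'.
exists u; first by apply: VD => //; apply: VB => //; apply: Bscal.
have eh : h = row (inord t) g2 - \sum_(l < t) a (p + l)%N *: row (inord l) g2.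
  rewrite /h /beta mulmxBl mulmx_suml rowE; congr (_ - _); apply: eq_bigr => l _.
  by rewrite -scalemxAl rowE.
have ev : row (inord t) v = \sum_(i < p) a i *: Rf i + \sum_(l < t) a (p + l)%N *: row (inord l) v.
  rewrite -hGP ha /P big_split_ord /=; congr (_ + _); apply: eq_bigr => i _.
    by rewrite /G /fam /= ltn_ord.
  by rewrite /G /fam /= ltnNge leq_addr /= addKn.
apply: (indep_transform hD hinds (e := fun i => if (i < p)%N then 1 else (c%:A : D))
   (kappa := fun i => if (i < p)%N then (c%:A : D) * a i else a i)).
- move=> i hi; rewrite /fam /M0 /M1 hi; case: ltnP => hip.
    by rewrite /= /G /fam hip scaler0 addr0 scale1r.
  by rewrite /= rowu /G /fam ltnNge hip /= scalerDr scalerA ecs scale1r.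
- by move=> i hi; case: ltnP => _; rewrite ?oner_eq0.
- rewrite /fam /M0 /M1 ltnNge leq_addr /= ltnn scaler0 addr0 /P addKn rowu big_split_ord /=.
  have e1 : \sum_(i < p) (if (i < p)%N then (c%:A : D) * a i else a i) *:
       (if (i < p)%N then Rf i else row (inord (i - p)) u) = (c%:A : D) *: \sum_(i < p) a i *: Rf i.
    by rewrite scaler_sumr; apply: eq_bigr => i _; rewrite ltn_ord scalerA.
  have e2 : \sum_(i < t) (if (p + i < p)%N then (c%:A : D) * a (p + i)%N else a (p + i)%N) *:
       (if (p + i < p)%N then Rf (p + i)%N else row (inord (p + i - p)) u) =
       (c%:A : D) *: \sum_(l < t) a (p + l)%N *: row (inord l) v + \sum_(l < t) a (p + l)%N *: row (inord l) g2.
    rewrite scaler_sumr -big_split; apply: eq_bigr => i _ /=.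
    rewrite ltnNge leq_addr /= addKn rowu scalerDr !scalerA; congr (_ *: _ + _).
    by rewrite mulr_algl mulr_algr.
  rewrite e1 e2 ev eh scalerDr.
  set X := _ *: \sum_(i < p) _. set Y := _ *: \sum_(l < t) _ *: row _ v.
  set Z := row _ g2. set W := \sum_(l < t) _ *: row _ g2.
  rewrite (addrC Y W) (addrCA X W Y).
  by rewrite -[Z - W + _]addrA addKr addrC.
Qed.

Lemma key_lemma p (Rf : nat -> 'rV[D]_m.+1) : indep p Rf ->
  forall t, (t <= n.+1)%N -> (p + t <= m.+1)%N ->
  exists2 v, V v & indep (p + t) (fam Rf p v).
Proof.
move=> hR; elim => [|t IH] htn hpm.
  exists 0; first exact: V0.
  by rewrite addn0; apply: indep_ext hR => i hi; rewrite /fam hi.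
have hpm' : (p + t < m.+1)%N by rewrite addnS in hpm.
have [v Vv hv] := IH (ltnW htn) (ltnW hpm').
by rewrite addnS; apply: (key_step Vv hv htn).
Qed.

Definition blk (vs : nat -> 'M[D]_(n.+1, m.+1)) (i : nat) : 'rV[D]_m.+1 :=
  row (inord (i %% n.+1)%N) (vs (i %/ n.+1)%N).

Lemma blocks j : (j * n.+1 <= m.+1)%N ->
  exists vs : nat -> 'M[D]_(n.+1, m.+1), (forall i, (i < j)%N -> V (vs i)) /\ indep (j * n.+1) (blk vs).
Proof.
elim: j => [|j IH] hj.
  by exists (fun _ => 0); split => // a _ i; rewrite mul0n.
have hj' : (j * n.+1 + n.+1 <= m.+1)%N by rewrite -mulSnr.
have [vs [hVs hI]] := IH (leq_trans (leq_addr _ _) hj').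
have [v Vv hv] := key_lemma hI (leqnn _) hj'.
exists (fun i => if i == j then v else vs i); split.
  move=> i; rewrite ltnS leq_eqVlt => /orP [/eqP -> | hi]; first by rewrite eqxx.
  by rewrite (ltn_eqF hi); apply: hVs.
rewrite mulSnr; apply: indep_ext hv => i hi; rewrite /fam /blk.
case: ltnP => hij.
  by have := hij; rewrite -ltn_divLR // => hq; rewrite (ltn_eqF hq).
have [k ek] : exists k, i = (j * n.+1 + k)%N by exists (i - j * n.+1)%N; rewrite subnKC.
have hk : (k < n.+1)%N by rewrite ek ltn_add2l in hi.
rewrite ek addKn divnMDl // divn_small // addn0 eqxx.
by rewrite modnMDl modn_small.
Qed.
End Key.


Unset Implicit Arguments. Set Strict Implicit. Set Printing Implicit Defensive.

Theorem lemma1p2 (F : fieldType) (D : unitAlgType F) (n m : nat)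
  (B : 'M[D]_n.+1 -> Prop) (V : 'M[D]_(n.+1, m) -> Prop) :
  infinite_field F -> division_ring D ->
  subalg_containing_k B -> dense B ->
  (0 < m)%N ->
  B_submodule B V -> A_generates V ->
  exists sigma : 'M[D]_(n.+1, m) -> 'M[D]_(n.+1, m),
    A_automorphism sigma /\
    (forall j : 'I_(m %/ n.+1), exists2 v, V v & sigma v = Eblk D j) /\
    (exists Y : 'M[D]_(n.+1, m),
       (exists2 v, V v & sigma v = Y) /\ full_col_rank (last_cols Y)).
Proof.
move=> hF hD hB hdense hm; case: m V hm => [//|m] V _ hV hgen.
have hq : ((m.+1 %/ n.+1) * n.+1 <= m.+1)%N by apply: leq_trunc_div.
have [vs [hVs hI]] := blocks hF hD hB hdense hV hgen hq.
have hmr : ((m.+1 %/ n.+1) * n.+1 + m.+1 %% n.+1)%N = m.+1 by rewrite -divn_eq.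
have hr : (m.+1 %% n.+1 <= n.+1)%N by apply: ltnW; apply: ltn_pmod.
have [vl Vl hl] := key_lemma hF hD hB hdense hV hgen hI hr (eq_leq hmr).
rewrite hmr in hl.
have [T [hTS hST]] := sq_inv hD hl.
set S := \matrix_(i < m.+1) _ in hTS hST.
set q := (m.+1 %/ n.+1)%N in hq hmr hI hVs *.
set r := (m.+1 %% n.+1)%N in hmr hr hl *.
have hSrow : forall i : 'I_m.+1, row i S = fam (blk vs) (q * n.+1) vl i by move=> i; rewrite rowK.
exists (fun X => X *m T); split.
  split; first by move=> x y; rewrite mulmxDl.
  split; first by move=> a x; rewrite mulmxA.
  exists (fun X => X *m S) => X; by rewrite -mulmxA ?hTS ?hST mulmx1.
split.
  move=> j; exists (vs j); first by apply: hVs.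
  suff <- : Eblk D j *m S = vs j by rewrite -mulmxA hST mulmx1.
  apply/matrixP => i c.
  have hjq : (j * n.+1 + i < q * n.+1)%N.
    apply: (@leq_trans (j.+1 * n.+1)).
      by rewrite mulSnr ltn_add2l.
    by rewrite leq_mul2r ltn_ord orbT.
  have hji : (j * n.+1 + i < m.+1)%N by apply: leq_trans hq.
  rewrite !mxE (bigD1 (Ordinal hji)) //= big1 ?addr0.
    rewrite !mxE eqxx mul1r /fam /blk /= hjq modnMDl modn_small // divnMDl // divn_small // addn0.
    by rewrite inord_val mxE.
  move=> k hk; rewrite !mxE.
  have -> : (k == (j * n.+1 + i)%N :> nat) = false.
    by apply/negbTE; move: hk; apply: contra => /eqP e; apply/eqP; apply: val_inj; rewrite /= e.
  by rewrite mul0r.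
exists (vl *m T); split; first by exists vl.
have hY : forall l : 'I_r, row (inord l) (vl *m T) = row (Ordinal (last_col_lt l)) 1%:M.
  move=> l; rewrite row_mul -hST row_mul; congr (_ *m _).
  rewrite hSrow /fam /= ltnNge leq_addr /= addKn //.
move=> x hx; apply/matrixP => l z; rewrite ord1 [RHS]mxE.
have h0 := congr1 (fun M : 'M[D]_(n.+1, 1) => M (inord l) 0) hx.
apply: etrans (etrans h0 _); last by rewrite mxE.
rewrite [RHS]mxE.
rewrite (bigD1 l) //= big1 ?addr0.
  rewrite mxE.
  have := congr1 (fun M : 'rV[D]_m.+1 => M 0 (Ordinal (last_col_lt l))) (hY l); rewrite !mxE => ->.
  by rewrite eqxx mul1r.
move=> k hk; rewrite mxE.
have := congr1 (fun M : 'rV[D]_m.+1 => M 0 (Ordinal (last_col_lt k))) (hY l); rewrite !mxE => ->.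
have -> : (Ordinal (last_col_lt l) == Ordinal (last_col_lt k)) = false.
  apply/negbTE; move: hk; apply: contra => /eqP e; apply/eqP; apply: val_inj.
  by move/(congr1 val): e => /= /eqP; rewrite eqn_add2l => /eqP.
by rewrite mul0r.
Qed.

Print Assumptions lemma1p2.
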